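(* Let $q\ge1$ and $\epsilon>0$ be constants, $k\ge4$ even, and $(T,d)$ a $k$-point metric space of constant doubling dimension $D$. Let $\Delta=\frac{4}{k^2}\mathrm{bp}^q(T)$ and $\Delta'=\frac{1}{2^q+1}\cdot\frac{4}{k^2}\mathrm{cl}^q(T)$ (so that $\frac12\Delta^{1/q}\le\Delta'^{1/q}\le\Delta^{1/q}$), let $z\in T$ minimize $\sum_{u\in T}d^q(z,u)$, and let $\delta>0$ be a constant with $1/\delta=\Theta(2^q/\epsilon)$. Consider the following cell decomposition: while some point of $T$ is not assigned to a cell, pick such a point $u$, open a new cell with center $u$, and add to it every not yet assigned point $v\in T$ with $d(v,u)\le\delta\max\{\Delta'^{1/q},\frac12 d(v,z)\}$. This decomposition produces $O\big((2^q/\epsilon)^D\log k\big)$ cells.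
   Context: $d^q(u,v)=d(u,v)^q$; $\mathrm{cl}^q(T)=\sum_{\{u,v\}\subseteq T}d^q(u,v)$; $\mathrm{bp}^q(T)=\min_{L\subseteq T,|L|=k/2}\sum_{\ell\in L,r\in T\setminus L}d^q(\ell,r)$. The doubling dimension of $(T,d)$ is the smallest $D\ge0$ such that every ball can be covered by at most $2^D$ balls of half its radius. *)

(* Defs.v *)
From HB Require Import structures.
From mathcomp Require Import all_boot all_order all_algebra.
From mathcomp Require Import all_classical all_reals.
From mathcomp Require Import exp.
Set Implicit Arguments. Unset Strict Implicit. Unset Printing Implicit Defensive.
Import Order.TTheory GRing.Theory Num.Theory.
Local Open Scope ring_scope.

Section Defs.
Variables (R : realType) (T : finType).
Implicit Types (d : T -> T -> R) (q D delta : R).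

Definition is_metric d : Prop :=
  [/\ forall x y, 0 <= d x y,
      forall x y, d x y = 0 <-> x = y,
      forall x y, d x y = d y x
    & forall x y w, d x w <= d x y + d y w].

Definition dq q d (u v : T) : R := d u v `^ q.

(* cl^q(T) = sum over unordered pairs {u,v} of d^q(u,v)
   (= half the sum over ordered pairs of distinct points) *)
Definition clq q d : R := (\sum_(u : T) \sum_(v : T | u != v) dq q d u v) / 2.

Definition doubling_prop d D : Prop :=
  forall (x : T) (r : R), 0 < r ->
    exists S : {set T}, (#|S|%:R <= 2 `^ D) /\
      forall y, d x y <= r -> exists2 c, c \in S & d c y <= r / 2.

Definition is_doubling_dim d D : Prop :=
  [/\ 0 <= D, doubling_prop d D &
      forall D', 0 <= D' -> doubling_prop d D' -> D <= D'].

Definition is_qmedian q d (z : T) : Prop :=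
  forall w : T, \sum_(u : T) dq q d z u <= \sum_(u : T) dq q d w u.

Definition Delta' q d : R :=
  (2 `^ q + 1)^-1 * (4 / (#|T|%:R ^+ 2)) * clq q d.

Definition close q d delta (z v u : T) : bool :=
  d v u <= delta * Num.max (Delta' q d `^ q^-1) (d v z / 2).

Definition assigned q d delta (z : T) (centers : seq T) (v : T) : bool :=
  has (close q d delta z v) centers.

(* valid_run acc s: starting with the already opened centers acc, the process
   opens the cells with centers s (in order), each new center being a not yet
   assigned point, and at the end every point is assigned. *)
Fixpoint valid_run q d delta (z : T) (acc s : seq T) : Prop :=
  match s with
  | [::] => forall v : T, assigned q d delta z acc v
  | u :: s' => ~~ assigned q d delta z acc u /\ valid_run q d delta z (rcons acc u) s'
  end.

End Defs.

(* Main.v *)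
Require Import Defs.
From HB Require Import structures.
From mathcomp Require Import all_boot all_order all_algebra.
From mathcomp Require Import all_classical all_reals.
From mathcomp Require Import exp.
From mathcomp Require Import ring lra.
Import Order.TTheory GRing.Theory Num.Theory.
Local Open Scope ring_scope.

Section Gen.
Variables (R : realType) (T : finType) (d : T -> T -> R) (D : R).
Hypotheses (hm : is_metric d) (hD0 : 0 <= D) (hdb : doubling_prop d D).

Lemma card_bigcup_seq (F : T -> {set T}) (l : seq T) :
  (#|\bigcup_(c <- l) F c| <= \sum_(c <- l) #|F c|)%N.
Proof.
elim: l => [|a l IH]; first by rewrite !big_nil cards0.
rewrite !big_cons; apply: leq_trans (leq_card_setU _ _).1 _.
by rewrite leq_add2l.
Qed.

Lemma mem_bigcup_seq (F : T -> {set T}) (l : seq T) c y :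
  c \in l -> y \in F c -> y \in \bigcup_(c <- l) F c.
Proof.
elim: l => [//|a l IH]; rewrite big_cons !inE => /orP[/eqP->->//|cl yF].
by rewrite IH ?orbT.
Qed.

Lemma sum_card_le (F : T -> {set T}) (l : seq T) :
  (forall c, (#|F c|%:R <= 2 `^ D :> R)) ->
  ((\sum_(c <- l) #|F c|)%N%:R <= (size l)%:R * 2 `^ D :> R).
Proof.
move=> hF; elim: l => [|a l IH]; first by rewrite big_nil mul0r.
by rewrite big_cons natrD /= -addn1 natrD mulrDl mul1r addrC lerD.
Qed.

Lemma cover x (Rr : R) m : 0 < Rr -> exists S : {set T},
  (#|S|%:R <= (2 `^ D) ^+ m) /\
  forall y, d x y <= Rr -> exists2 c, c \in S & d c y <= Rr / 2 ^+ m.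
Proof.
move=> hR; elim: m => [|m [S [hS hc]]].
  exists [set x]; split; first by rewrite cards1 expr0.
  by move=> y hy; exists x; rewrite ?inE // expr0 divr1.
have hr : 0 < Rr / 2 ^+ m by rewrite divr_gt0 // exprn_gt0.
have : forall c : T, exists S' : {set T}, (#|S'|%:R <= 2 `^ D) /\
   forall y, d c y <= Rr / 2 ^+ m -> exists2 c', c' \in S' & d c' y <= Rr / 2 ^+ m / 2.
  by move=> c; exact: hdb.
case/fin_all_exists => F hF.
exists (\bigcup_(c <- enum S) F c); split.
  apply: (le_trans (y := (\sum_(c <- enum S) #|F c|)%N%:R)).
    by rewrite ler_nat; exact: card_bigcup_seq.
  apply: le_trans; first by apply: sum_card_le => c; case: (hF c).
  rewrite exprSr -cardE ler_wpM2r // ?powR_ge0 //.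
move=> y /hc [c cS hcy]; case: (hF c) => _ /(_ _ hcy) [c' c'F hc'].
exists c'; first by apply: (@mem_bigcup_seq _ _ c); rewrite ?mem_enum.
by rewrite exprSr invfM mulrA.
Qed.

Lemma pack x (Rr sg : R) m (P : seq T) : 0 < Rr -> Rr / 2 ^+ m * 2 <= sg ->
  uniq P -> (forall y, y \in P -> d x y <= Rr) ->
  (forall y y', y \in P -> y' \in P -> y != y' -> sg < d y y') ->
  (size P)%:R <= (2 `^ D) ^+ m.
Proof.
move=> hR hsg uP hin hsep.
case: (cover x Rr m hR) => S [hS hc].
have : forall y : T, exists c : T, d x y <= Rr -> c \in S /\ d c y <= Rr / 2 ^+ m.
  move=> y; case: (boolP (d x y <= Rr)) => h; last by exists x.
  by case: (hc y h) => c ? ?; exists c.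
case/fin_all_exists => f hf.
apply: le_trans hS; rewrite ler_nat cardE.
have <- : size (map f P) = size P by rewrite size_map.
apply: uniq_leq_size.
  rewrite map_inj_in_uniq // => y y' yP y'P fe.
  apply/eqP; apply/negP => /negP ne; have := hsep _ _ yP y'P ne.
  case: hm => _ _ hsym htr.
  case: (hf y (hin _ yP)) => _ h1; case: (hf y' (hin _ y'P)) => _ h2.
  rewrite fe in h1.
  have := htr y (f y') y'; rewrite (hsym y (f y')) => h3.
  by move=> h4; have := lt_le_trans h4 h3; lra.
move=> c /mapP [y yP ->]; rewrite mem_enum; by case: (hf y (hin _ yP)).
Qed.

End Gen.


Section Dist.
Variables (R : realType) (T : finType) (d : T -> T -> R) (q : R) (z : T).
Hypotheses (hm : is_metric d) (hq : 1 <= q) (hmed : is_qmedian q d z).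

Lemma powD_le a b : 0 <= a -> 0 <= b -> (a + b) `^ q <= 2 `^ q * (a `^ q + b `^ q).
Proof.
have hq1 := hq; have q0 : 0 <= q by lra.
wlog ab : a b / a <= b.
  move=> H a0 b0; case: (leP a b) => h; first exact: H.
  by rewrite addrC [_ `^ q + _]addrC; apply: H => //; apply: ltW.
move=> a0 b0.
have h1 : (a + b) `^ q <= (2 * b) `^ q.
  by apply: ge0_ler_powR => //; rewrite ?nnegrE //; lra.
apply: le_trans h1 _; rewrite powRM //; apply: ler_wpM2l; first exact: powR_ge0.
by rewrite lerDr powR_ge0.
Qed.

Lemma dq_self u : dq q d u u = 0.
Proof.
case: hm => _ h0 _ _; rewrite /dq (proj2 (h0 u u) erefl) powR0 //.
by apply/eqP => q0; have hq1 := hq; rewrite q0 in hq1; lra.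
Qed.

Lemma sum_dq_le u : \sum_v dq q d u v <= 2 * clq q d.
Proof.
have hge : forall a b, 0 <= dq q d a b by move=> a b; exact: powR_ge0.
rewrite /clq mulrC divfK ?(pnatr_eq0 _ 2) //.
rewrite (bigD1 u) //= dq_self add0r.
rewrite [X in _ <= X](bigD1 u) //=.
rewrite (eq_bigl (fun v => u != v)) => [|v]; last by rewrite eq_sym.
rewrite lerDl; apply: sumr_ge0 => w _; apply: sumr_ge0 => v _; exact: hge.
Qed.

Lemma key_ineq u : #|T|%:R * (d u z) `^ q <= 2 `^ q * (4 * clq q d).
Proof.
case: hm => hp _ hsym htr.
have -> : 4 * clq q d = 2 * (2 * clq q d) by lra.
have e : \sum_(v : T) d u z `^ q = #|T|%:R * d u z `^ q.
  by rewrite sumr_const mulr_natl.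
rewrite -e.
apply: (le_trans (y := \sum_v 2 `^ q * (dq q d u v + dq q d z v))).
  apply: ler_sum => v _; rewrite /dq; have h1 := @powD_le (d u v) (d z v) (hp u v) (hp z v).
  apply: le_trans (_ : _ <= (d u v + d z v) `^ q) h1.
  by apply: ge0_ler_powR; rewrite ?nnegrE ?addr_ge0 -?(hsym v z) ?htr //; have hq1 := hq; lra.
rewrite -mulr_sumr ler_wpM2l ?powR_ge0 // big_split /=.
have := hmed u; have := sum_dq_le u; lra.
Qed.

Lemma clq_eq : (0 < #|T|)%N -> clq q d = Delta' q d * (2 `^ q + 1) * #|T|%:R ^+ 2 / 4.
Proof.
move=> k0; rewrite /Delta'.
have h1 : 2 `^ q + 1 != 0 :> R by rewrite gt_eqF // ltr_wpDl ?powR_ge0.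
have h2 : #|T|%:R != 0 :> R by rewrite pnatr_eq0 -lt0n.
field; rewrite ?h1 ?h2 ?expf_neq0 //.
Qed.

Lemma maxdist u : (0 < #|T|)%N -> d u z <= 8 * #|T|%:R * Delta' q d `^ q^-1.
Proof.
move=> k0; case: hm => hp _ hsym htr.
have hq1 := hq; have q0 : 0 < q by lra.
set k := #|T|%:R : R.
have kge1 : 1 <= k by rewrite ler1n.
set Dl := Delta' q d.
have Dl0 : 0 <= Dl.
  rewrite /Dl /Delta' /clq; apply: mulr_ge0; first apply: mulr_ge0.
  - by rewrite invr_ge0 addr_ge0 ?powR_ge0.
  - by rewrite divr_ge0 // exprn_ge0.
  apply: divr_ge0 => //; apply: sumr_ge0 => a _; apply: sumr_ge0 => b _; exact: powR_ge0.
rewrite leNgt; apply/negP => hlt.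
have hr0 : 0 <= Dl `^ q^-1 by exact: powR_ge0.
have := gt0_ltr_powR q0 _ _ hlt; rewrite !nnegrE => /(_ _ (hp _ _)).
rewrite mulr_ge0 ?mulr_ge0 // ?ler0n //.
move=> /(_ isT).
have e1 : (8 * k * Dl `^ q^-1) `^ q = 8 `^ q * k `^ q * Dl.
  have k0' : 0 <= k by lra.
  rewrite powRM; [|lra|exact: hr0].
  rewrite powRM; [|lra|lra].
  by rewrite -powRrM mulVf ?gt_eqF // powRr1.
rewrite e1.
have hk := key_ineq u; rewrite (clq_eq k0) in hk; fold Dl k in hk.
have t2 : 2 <= 2 `^ q by apply: le1r_powR => //; lra.
have k1 : k <= k `^ q by apply: le1r_powR => //; lra.
have e8 : 8 `^ q = 2 `^ q * (2 `^ q * 2 `^ q).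
  have -> : (8:R) = 2 * (2 * 2) by lra.
  rewrite powRM ?mulr_ge0 ?ler0n // powRM ?ler0n //.
rewrite e8 => hlt2.
set t := 2 `^ q in t2 hk e8 hlt2; set kq := k `^ q in k1 hlt2.
set a := d u z `^ q in hk hlt2.
have hk' : a <= t * (t + 1) * k * Dl.
  have kp : 0 < k by lra.
  rewrite -(ler_pM2l kp).
  have -> : k * (t * (t + 1) * k * Dl) = t * (4 * (Dl * (t + 1) * k ^+ 2 / 4)) by field.
  exact: hk.
have : t * (t + 1) * k * Dl <= t * (t * t) * kq * Dl.
  apply: ler_wpM2r => //; apply: ler_pM; rewrite ?mulr_ge0 //; try lra.
  by apply: ler_wpM2l; nra.
lra.
Qed.

End Dist.


Lemma size_le_sum (A : eqType) (f : A -> nat) n (s : seq A) :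
  (forall x, x \in s -> (f x < n)%N) ->
  (size s <= \sum_(i < n) count (fun x => f x == i) s)%N.
Proof.
elim: s => [|a s IH] hs //=.
rewrite big_split /=.
have ha : (f a < n)%N by apply: hs; rewrite inE eqxx.
rewrite (bigD1 (Ordinal ha)) //= eqxx add1n addSn ltnS.
apply: leq_trans (leq_addl _ _).
by apply: IH => x xs; apply: hs; rewrite inE xs orbT.
Qed.

Lemma pow2_exists (R : realType) (x : R) :
  exists m : nat, x <= 2 ^+ m /\ 2 ^+ m <= Num.max 1 (2 * x).
Proof.
have [n hn] : exists n : nat, x <= n%:R.
  by exists (Num.truncn x).+1; apply: ltW; apply: truncnS_gt.
elim: n x hn => [|n IH] x hx.
  by exists 0%N; rewrite expr0; split; [lra| rewrite le_max lexx].
case: (lerP x 1) => h1.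
  by exists 0%N; rewrite expr0; split => //; rewrite le_max lexx.
have : x / 2 <= n%:R.
  have : (n.+1%:R : R) = n%:R + 1 by rewrite -addn1 natrD.
  case: n IH hx => [|n] IH hx; rewrite ?mulr0n => e; first by lra.
  have : (1 : R) <= n.+1%:R by rewrite ler1n.
  lra.
case/IH => m [h2 h3]; exists m.+1; rewrite exprS; split; first by lra.
have h4 : 2 ^+ m <= x.
  apply: (le_trans h3); rewrite ge_max; apply/andP; split; lra.
rewrite le_max; apply/orP; right; lra.
Qed.

Section Sep.
Variables (R : realType) (T : finType) (d : T -> T -> R) (q delta : R) (z : T).
Hypotheses (hm : is_metric d) (hdel : 0 <= delta).

Definition sepr (x y : T) : bool :=
  (delta * Num.max (Delta' q d `^ q^-1) (d x z / 2) < d x y) ||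
  (delta * Num.max (Delta' q d `^ q^-1) (d y z / 2) < d y x).

Lemma close_self u : close q d delta z u u.
Proof.
case: hm => hp h0 _ _; rewrite /close (proj2 (h0 u u) erefl).
apply: mulr_ge0 => //; rewrite le_max powR_ge0 //.
Qed.

Lemma run_sep acc s : valid_run q d delta z acc s -> uniq acc ->
  (forall x y, x \in acc -> y \in acc -> x != y -> sepr x y) ->
  uniq (acc ++ s) /\
  (forall x y, x \in acc ++ s -> y \in acc ++ s -> x != y -> sepr x y).
Proof.
elim: s acc => [|u s IH] acc /=.
  by rewrite cats0 => _ ? ?.
move=> [hna hrun] hu hsep.
have uacc : u \notin acc.
  apply/negP => ua; move/negP: hna; apply; apply/hasP; exists u => //.
  exact: close_self.
rewrite -cat_rcons; apply: IH => //.
  by rewrite rcons_uniq uacc.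
have hfar : forall c, c \in acc -> delta * Num.max (Delta' q d `^ q^-1) (d u z / 2) < d u c.
  move=> c ca; rewrite ltNge; apply/negP => hc; move/negP: hna; apply.
  by apply/hasP; exists c.
move=> x y; rewrite !mem_rcons !inE => /orP[/eqP->|xa] /orP[/eqP->|ya] ne.
- by rewrite eqxx in ne.
- by rewrite /sepr hfar.
- by rewrite /sepr (hfar x xa) orbT.
- exact: hsep.
Qed.

End Sep.

Lemma ln_bound (R : realType) (k : R) (L : nat) : 4 <= k ->
  2 ^+ L <= Num.max 1 (2 * (8 * k)) -> L.+1%:R <= 4 / ln 2 * ln k.
Proof.
move=> k4 hL2.
have ln2 : 0 < ln (2 : R) by apply: ln_gt0; lra.
have k0' : 0 < k by lra.
have h16 : 2 ^+ L <= k ^+ 3.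
  have kk : 4 * 4 <= k * k by apply: ler_pM; lra.
  have kkk : 4 * 4 * k <= k * k * k by apply: ler_wpM2r; lra.
  have e3 : k ^+ 3 = k * k * k by rewrite !exprS expr0 mulr1 mulrA.
  apply: le_trans hL2 _; rewrite e3 ge_max; apply/andP; split; lra.
have hlnL : ln (2 ^+ L : R) <= ln (k ^+ 3).
  by rewrite ler_ln // posrE exprn_gt0 //; lra.
rewrite !lnXn // -[ln 2 *+ L]mulr_natr -[ln k *+ 3]mulr_natr in hlnL.
have h2k : ln (2 : R) <= ln k by rewrite ler_ln ?posrE //; lra.
have -> : 4 / ln 2 * ln k = (4 * ln k) / ln 2 by rewrite mulrAC.
rewrite ler_pdivlMr // -addn1 natrD mulrDl mul1r [_ * ln 2]mulrC.
lra.
Qed.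

Lemma comb (R : realType) (x l X Y c : R) : x <= l * X -> X <= Y -> l <= c ->
  0 <= l -> 0 <= Y -> x <= c * Y.
Proof.
move=> h1 h2 h3 l0 Y0; apply: le_trans h1 _; apply: le_trans (ler_wpM2l l0 h2) _.
exact: ler_wpM2r.
Qed.


Theorem lemma13 (R : realType) (D c1 c2 : R) :
  0 <= D -> 0 < c1 -> c1 <= c2 ->
  exists C : R, 0 < C /\
  forall (q eps delta : R) (T : finType) (d : T -> T -> R) (z : T),
    1 <= q -> 0 < eps <= 1 ->
    ~~ odd #|T| -> (4 <= #|T|)%N ->
    is_metric d -> is_doubling_dim d D ->
    c1 * eps / 2 `^ q <= delta <= c2 * eps / 2 `^ q ->
    is_qmedian q d z ->
    forall s : seq T, valid_run q d delta z [::] s ->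
      (size s)%:R <= C * (2 `^ q / eps) `^ D * ln (#|T|%:R : R).
Proof.
move=> hD0 hc1 hc12.
set M := Num.max 1 (16 / c1).
have M1 : 1 <= M by rewrite le_max lexx.
have ln2 : 0 < ln (2 : R) by apply: ln_gt0; lra.
exists (4 / ln 2 * M `^ D); split.
  apply: mulr_gt0; first by apply: divr_gt0 => //; lra.
  by apply: powR_gt0; lra.
move=> q eps delta T d z hq /andP[he0 he1] hodd hk4 hm [_ hdb _] /andP[hdl _] hmed s hrun.
have hq1 := hq.
have k0 : (0 < #|T|)%N by apply: leq_trans hk4.
set k := #|T|%:R : R.
have kge4 : 4 <= k by rewrite /k (ler_nat R 4 #|T|).
have t2 : 2 <= 2 `^ q by apply: le1r_powR => //; lra.
set Q := 2 `^ q / eps.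
have Q1 : 1 <= Q by rewrite /Q ler_pdivlMr // mul1r; lra.
have hdel0 : 0 < delta.
  apply: lt_le_trans hdl; apply: divr_gt0; [apply: mulr_gt0 => //| lra].
case: (hm) => hp h0 hsym htr.
have Dl0 : 0 < Delta' q d.
  have : (1 < #|T|)%N by apply: leq_trans hk4.
  case/card_gt1P => u0 [v0 [_ _ uv]].
  have duv : 0 < d u0 v0.
    rewrite lt_neqAle hp andbT; apply/eqP => e.
    by move/eqP: uv; apply; apply/(h0 u0 v0).
  have hge : forall a b, 0 <= dq q d a b by move=> a b; exact: powR_ge0.
  have cl0 : 0 < clq q d.
    rewrite /clq; apply: divr_gt0; last by lra.
    have addpos : forall a b : R, 0 < a -> 0 <= b -> 0 < a + b by move=> a b ? ?; lra.
    rewrite (bigD1 u0) //=; apply: (addpos).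
      rewrite (bigD1 v0) //=; apply: (addpos); first exact: powR_gt0.
      by apply: sumr_ge0 => *.
    by apply: sumr_ge0 => *; apply: sumr_ge0 => *.
  rewrite /Delta'; apply: mulr_gt0 => //; apply: mulr_gt0.
    by rewrite invr_gt0; apply: ltr_wpDl; [exact: powR_ge0| lra].
  by apply: divr_gt0; [lra | apply: exprn_gt0; lra].
set r := Delta' q d `^ q^-1.
have r0 : 0 < r by exact: powR_gt0.
have hmax : forall u, d u z <= 8 * k * r by move=> u; exact: maxdist.
have [L [hL1 hL2]] := @pow2_exists R (8 * k).
have [m [hm1 hm2]] := @pow2_exists R (8 * Q / c1).
pose a x := fun i : nat => d x z <= 2 ^+ i * r.
pose lvl x := find (a x) (iota 0 L.+1).
have hhas : forall x, has (a x) (iota 0 L.+1).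
  move=> x; apply/hasP; exists L; first by rewrite mem_iota leq0n add0n ltnSn.
  rewrite /a; apply: le_trans (hmax x) _; apply: ler_wpM2r; lra.
have hlvl_lt : forall x, (lvl x < L.+1)%N.
  by move=> x; have := hhas x; rewrite has_find size_iota.
have hlvl_up : forall x, d x z <= 2 ^+ (lvl x) * r.
  move=> x; have := nth_find 0%N (hhas x); rewrite nth_iota ?hlvl_lt //.
have hlvl_low : forall x, 2 ^+ (lvl x) * r / 4 <= Num.max r (d x z / 2).
  move=> x; case e : (lvl x) => [|l].
    by rewrite expr0 mul1r le_max; apply/orP; left; lra.
  have hl : (l < lvl x)%N by rewrite e.
  have := before_find 0%N hl; rewrite nth_iota ?(ltn_trans hl) ?hlvl_lt // add0n.
  rewrite /a => /negbT; rewrite -ltNge exprS => hlt.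
  rewrite le_max; apply/orP; right; lra.
have := @run_sep R T d q delta z hm (ltW hdel0) [::] s hrun isT.
case=> [x y|us hsep]; first by rewrite in_nil.
rewrite /= in us hsep.
have hN : 8 <= delta * 2 ^+ m.
  have hq0 : 0 < 2 `^ q by lra.
  have e8 : (8 : R) = (c1 * eps / 2 `^ q) * (8 * Q / c1).
    by rewrite /Q; field; rewrite ?gt_eqF //.
  rewrite e8; apply: ler_pM => //.
  - apply: divr_ge0; [apply: mulr_ge0; lra| lra].
  - apply: divr_ge0; [apply: mulr_ge0; lra| lra].
have hlev : forall i : 'I_L.+1,
    (count (fun x => lvl x == i) s)%:R <= (2 `^ D) ^+ m.
  move=> i; rewrite -size_filter.
  have P0 : 0 < 2 ^+ i * r by apply: mulr_gt0 => //; apply: exprn_gt0; lra.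
  apply: (@pack R T d D hm hdb z (2 ^+ i * r) (delta * (2 ^+ i * r / 4))) => //.
  - have N0 : 0 < (2 : R) ^+ m by apply: exprn_gt0; lra.
    have -> : 2 ^+ i * r / 2 ^+ m * 2 = (2 ^+ i * r / 4) * (8 / 2 ^+ m).
      by field; rewrite gt_eqF.
    rewrite [delta * _]mulrC; apply: ler_wpM2l; first by apply: divr_ge0; lra.
    by rewrite ler_pdivrMr.
  - exact: filter_uniq.
  - move=> y; rewrite mem_filter => /andP[/eqP hi _].
    by rewrite hsym -hi.
  - move=> y y'; rewrite !mem_filter => /andP[/eqP hi ys] /andP[/eqP hi' ys'] ne.
    have := hsep y y' ys ys' ne; rewrite /sepr -/r => /orP[] h.
      apply: le_lt_trans h; apply: ler_wpM2l; first lra.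
      by rewrite -hi.
    rewrite hsym; apply: le_lt_trans h; apply: ler_wpM2l; first lra.
    by rewrite -hi'.
have hsz : (size s)%:R <= L.+1%:R * (2 `^ D) ^+ m.
  apply: (le_trans (y := (\sum_(i < L.+1) count (fun x => lvl x == i) s)%N%:R)).
    by rewrite ler_nat; apply: size_le_sum => x _; exact: hlvl_lt.
  rewrite natr_sum; apply: le_trans (ler_sum _ (fun i _ => hlev i)) _.
  by rewrite sumr_const card_ord mulr_natl.
have hpow : (2 `^ D) ^+ m <= M `^ D * Q `^ D.
  rewrite -powR_mulrn ?powR_ge0 // -powRrM mulrC powRrM powR_mulrn; last lra.
  rewrite -powRM; [|lra|lra].
  apply: ge0_ler_powR => //; first by rewrite nnegrE exprn_ge0.
    by rewrite nnegrE; apply: mulr_ge0; lra.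
  apply: le_trans hm2 _; rewrite ge_max; apply/andP; split.
    by rewrite -[1]mulr1; apply: ler_pM => //; lra.
  have -> : 2 * (8 * Q / c1) = (16 / c1) * Q by field; rewrite gt_eqF.
  by apply: ler_wpM2r; [lra | rewrite le_max lexx orbT].
have hLn : L.+1%:R <= 4 / ln 2 * ln k by exact: ln_bound.
have -> : 4 / ln 2 * M `^ D * Q `^ D * ln k = (4 / ln 2 * ln k) * (M `^ D * Q `^ D).
  by ring.
apply: comb hsz hpow hLn _ _; first by rewrite ler0n.
by apply: mulr_ge0; apply: powR_ge0.
Qed.
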